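(* If $0\le\Delta<1$ and $0<\gamma<\frac{2(1+\Delta)}{\zeta\sigma_{\max}^2}$, then $\lambda_{2,\max}<1$.
   Context: $\sigma_1^2\ge\dots\ge\sigma_n^2\ge0$ are the eigenvalues of $\boldsymbol A\boldsymbol A^T$ for $\boldsymbol A\in\mathbb R^{n\times d}$, $\sigma_{\max}^2$ the largest; $\zeta\in(0,1]$. For $j\in[n]$: $\Omega_j=1-\gamma\zeta\sigma_j^2+\Delta$ and $\lambda_{2,j}=\frac{-2\Delta+\Omega_j^2+\sqrt{\Omega_j^2(\Omega_j^2-4\Delta)}}{2}$ (complex square root if the argument is negative). $\lambda_{2,\max}=\max\{|\lambda_{2,j}|:\sigma_j^2>0\}$. *)

(* Defs.v *)
From HB Require Import structures.
From mathcomp Require Import all_boot all_order all_algebra.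
From mathcomp Require Import complex.
Set Implicit Arguments. Unset Strict Implicit. Unset Printing Implicit Defensive.
Import Order.TTheory GRing.Theory Num.Theory.
Local Open Scope ring_scope.

Definition csqrt_real (R : rcfType) (x : R) : R[i] :=
  if 0 <= x then Complex (Num.sqrt x) 0 else Complex 0 (Num.sqrt (- x)).

(* Omega_j = 1 - gamma * zeta * sigma_j^2 + Delta, where s = sigma_j^2 *)
Definition Omega (R : rcfType) (gamma zeta Delta s : R) : R :=
  1 - gamma * zeta * s + Delta.

Definition lambda2 (R : rcfType) (gamma zeta Delta s : R) : R[i] :=
  let O := Omega gamma zeta Delta s in
  (Complex (- (2 * Delta) + O ^+ 2) 0 + csqrt_real (O ^+ 2 * (O ^+ 2 - 4 * Delta))) / 2%:R.

(* sigma_max^2 : largest eigenvalue (the eigenvalues of A A^T are >= 0) *)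
Definition sigma_max2 (R : rcfType) (n : nat) (s : 'I_n -> R) : R :=
  \big[Num.max/0]_(j < n) s j.

Definition lambda2_max (R : rcfType) (n : nat) (s : 'I_n -> R)
    (gamma zeta Delta : R) : R :=
  \big[Num.max/0]_(j < n | 0 < s j) ComplexField.Normc.normc (lambda2 gamma zeta Delta (s j)).

(* Main.v *)
Require Import Defs.
From HB Require Import structures.
From mathcomp Require Import all_boot all_order all_algebra.
From mathcomp Require Import complex.
From mathcomp Require Import lra.
Import Order.TTheory GRing.Theory Num.Theory.
Local Open Scope ring_scope.

Lemma sqrt_lt2 (R : rcfType) (y : R) : y < 2 ^+ 2 -> Num.sqrt y < 2.
Proof.
move=> hy; have h2 : (2 : R) = Num.sqrt (2 ^+ 2) by rewrite sqrtr_sqr ger0_norm.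
by rewrite [X in _ < X]h2 ltr_sqrt ?exprn_gt0.
Qed.

Lemma key (R : rcfType) (gamma zeta Delta s : R) : 0 <= Delta -> Delta < 1 ->
  `|Omega gamma zeta Delta s| < 1 + Delta ->
  ComplexField.Normc.normc (lambda2 gamma zeta Delta s) < 1.
Proof.
move=> hD0 hD1; rewrite /lambda2.
set O := Omega _ _ _ _ => hO.
have hx : O ^+ 2 < (1 + Delta) ^+ 2.
  by rewrite -real_normK ?num_real // ltr_pXn2r // ?nnegrE ?normr_ge0 //; lra.
have hx0 : 0 <= O ^+ 2 by rewrite sqr_ge0.
set x := O ^+ 2 in hx hx0 *.
rewrite ComplexField.Normc.normcM ComplexField.Normc.normcV.
have -> : ComplexField.Normc.normc (2%:R : R[i]) = 2.
  rewrite /ComplexField.Normc.normc /=. rewrite !addr0 expr0n /= addr0 -[1 + 1]/(2%:R) sqrtr_sqr ger0_norm //.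
rewrite ltr_pdivrMr //= mul1r.
rewrite /csqrt_real; case: ifP => hp.
- rewrite /ComplexField.Normc.normc /=; apply: sqrt_lt2.
  have ht := sqrtr_ge0 (x * (x - 4 * Delta)).
  have ht2 := sqr_sqrtr hp.
  set t := Num.sqrt _ in ht ht2 *.
  have : t < 2 + 2 * Delta - x.
    rewrite ltNge; apply/negP => h.
    have hc : 0 < 2 + 2 * Delta - x by nra.
    have : (2 + 2 * Delta - x) ^+ 2 <= t ^+ 2.
      by rewrite ler_pXn2r // ?nnegrE //; lra.
    rewrite ht2; nra.
  move=> htl.
  rewrite !addr0 expr0n /= addr0. nra.
- rewrite /ComplexField.Normc.normc /=; apply: sqrt_lt2.
  have hn : 0 <= - (x * (x - 4 * Delta)) by rewrite oppr_ge0; move/negbT: hp; rewrite -ltNge; apply: ltW.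
  rewrite !add0r addr0 sqr_sqrtr //. nra.
Qed.

Theorem proposition13 (R : rcfType) (n d : nat) (A : 'M[R]_(n, d))
  (s : 'I_n -> R)
  (s_eig : char_poly (A *m A^T) = \prod_(j < n) ('X - (s j)%:P))
  (s_sorted : forall i j : 'I_n, (i <= j)%N -> s j <= s i)
  (zeta gamma Delta : R) (hzeta0 : 0 < zeta) (hzeta1 : zeta <= 1)
  (hD0 : 0 <= Delta) (hD1 : Delta < 1)
  (hg0 : 0 < gamma)
  (hg1 : gamma < 2 * (1 + Delta) / (zeta * sigma_max2 s)) :
  lambda2_max s gamma zeta Delta < 1.
Proof.
rewrite /lambda2_max.
apply: (big_ind (fun x => x < 1)) => //.
  by move=> x y hx hy; rewrite gt_max hx hy.
move=> j hj; apply: key => //.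
have hM : s j <= sigma_max2 s by exact: (le_bigmax 0 s j).
have hM0 : 0 < sigma_max2 s by apply: lt_le_trans hM.
have hzM : 0 < zeta * sigma_max2 s by apply: mulr_gt0.
move: hg1; rewrite ltr_pdivlMr // => hg1.
have h1 : gamma * zeta * s j <= gamma * (zeta * sigma_max2 s).
  by rewrite -mulrA ler_pM2l // ler_pM2l.
have h2 : 0 < gamma * zeta * s j by rewrite !mulr_gt0.
rewrite /Omega ltr_norml.
move: h1 h2 hg1 hD0 hD1.
set g := gamma * zeta * s j; set M := gamma * (zeta * sigma_max2 s).
clear => h1 h2 hg1 hD0 hD1.
apply/andP; split; lra.
Qed.
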